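(* Let $n,k,t$ be positive integers with $k\cdot t=\frac{n(n+1)}{2}$ and $t\ge n$. Then the recursive procedure $\Pi\mathit{Solve}$ (defined in the context) terminates on input $(n,k,t)$ and outputs sets $T_1,\ldots,T_k$ which are pairwise disjoint, satisfy $\{1,\ldots,n\}\subseteq \bigcup_{j=1}^k T_j\subseteq\{0,1,\ldots,n\}$, and satisfy $\sum_{x\in T_j}x=t$ for every $1\le j\le k$. Consequently the sets $T_j\setminus\{0\}$, $1\le j\le k$, form a $(k,t)$-partitioning of $\{1,\ldots,n\}$.
   Context: For integers $n,k,t$, a $(k,t)$-partitioning of $\{1,\ldots,n\}$ is a family of $k$ pairwise disjoint sets $T_1,\ldots,T_k$ with union $\{1,\ldots,n\}$ and $\sum_{x\in T_j}x=t$ for all $j$. The procedure $\Pi\mathit{Solve}(n,k,t)$ returns a list of $k$ sets and is defined recursively as follows. (Base cases.) If $k=0$, return the empty list. If $k=1$, return the single set $\{1,\ldots,n\}$ (empty if $n\le 0$). (Case $t\le 2n-1$, $t$ even.) Let $a=\frac{2n-t}{2}$. For $1\le i\le a$ put $T_i=\{t-n+(i-1),\,n-(i-1)\}$. Let $n'=t-n-1$, $k'=2(k-n)+t-1$, $t'=t/2$, and let $(S_1,\ldots,S_{k'})=\Pi\mathit{Solve}(n',k',t')$. Put $T_{a+1}=\{t/2\}\cup S_1$ and, for $2\le m\le k-a$, $T_{a+m}=S_{2m-2}\cup S_{2m-1}$. Return $(T_1,\ldots,T_k)$. (Case $t\le 2n-1$, $t$ odd.) Let $a=\frac{2n-t+1}{2}$.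 For $1\le i\le a$ put $T_i=\{t-n+(i-1),\,n-(i-1)\}$. Let $(S_1,\ldots,S_{k-a})=\Pi\mathit{Solve}(t-n-1,\,k-a,\,t)$ and put $T_{a+m}=S_m$ for $1\le m\le k-a$. Return $(T_1,\ldots,T_k)$. (Case $t\ge 2n$.) Let $(S_1,\ldots,S_k)=\Pi\mathit{Solve}(n-2k,\,k,\,t-2(n-k)-1)$ and put $T_i=\{n-2k+i,\,n-(i-1)\}\cup S_i$ for $1\le i\le k$. Return $(T_1,\ldots,T_k)$. *)

(* Defs.v *)
From HB Require Import structures.
From mathcomp Require Import all_boot all_order all_algebra.
From mathcomp Require Import finmap.
Set Implicit Arguments. Unset Strict Implicit. Unset Printing Implicit Defensive.
Import Order.TTheory GRing.Theory Num.Theory.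
Local Open Scope fset_scope.
Local Open Scope ring_scope.

Definition ton (z : int) : nat := if z is Posz m then m else 0%N.

Definition irange (lo hi : int) : seq int :=
  [seq lo + (i%:Z) | i <- iota 0 (ton (hi - lo + 1))].

(* 1-based access S_j to a list of sets (empty set if out of range) *)
Definition snth (S : seq {fset int}) (j : int) : {fset int} :=
  nth fset0 S (ton (j - 1)).

Definition upto (n : int) : {fset int} := [fset x | x in irange 1 n].

(* Big-step semantics of the recursive procedure PiSolve(n,k,t):
   [PiSolve n k t T] means that the call PiSolve(n,k,t) terminates and returns
   the list T = (T_1, ..., T_k).  The procedure is deterministic, so the
   existence of a derivation is exactly termination. *)
Inductive PiSolve : int -> int -> int -> seq {fset int} -> Prop :=
| PS_k0 (n t : int) : PiSolve n 0 t [::]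
| PS_k1 (n t : int) : PiSolve n 1 t [:: upto n]
| PS_even (n k t : int) (S : seq {fset int}) :
    k != 0 -> k != 1 -> t <= 2 * n - 1 -> (2 %| t)%Z ->
    let a := ((2 * n - t) %/ 2)%Z in
    PiSolve (t - n - 1) (2 * (k - n) + t - 1) (t %/ 2)%Z S ->
    PiSolve n k t
      ([seq [fset t - n + (i - 1); n - (i - 1)] | i <- irange 1 a]
       ++ [:: [fset (t %/ 2)%Z] `|` snth S 1]
       ++ [seq snth S (2 * m - 2) `|` snth S (2 * m - 1) | m <- irange 2 (k - a)])
| PS_odd (n k t : int) (S : seq {fset int}) :
    k != 0 -> k != 1 -> t <= 2 * n - 1 -> ~~ (2 %| t)%Z ->
    let a := ((2 * n - t + 1) %/ 2)%Z in
    PiSolve (t - n - 1) (k - a) t S ->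
    PiSolve n k t
      ([seq [fset t - n + (i - 1); n - (i - 1)] | i <- irange 1 a]
       ++ [seq snth S m | m <- irange 1 (k - a)])
| PS_big (n k t : int) (S : seq {fset int}) :
    k != 0 -> k != 1 -> 2 * n <= t ->
    PiSolve (n - 2 * k) k (t - 2 * (n - k) - 1) S ->
    PiSolve n k t
      [seq [fset n - 2 * k + i; n - (i - 1)] `|` snth S i | i <- irange 1 k].

Definition partitioning (n k t : int) (T : seq {fset int}) : Prop :=
  [/\ (size T)%:Z = k,
      (forall i j : nat, (i < j < size T)%N ->
          nth fset0 T i `&` nth fset0 T j = fset0),
      (forall x : int, (exists2 j : nat, (j < size T)%N & x \in nth fset0 T j)
                       <-> (1 <= x <= n)) &
      (forall j : nat, (j < size T)%N -> \sum_(x <- nth fset0 T j) x = t)].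

(* Main.v *)
Require Import Defs.
From HB Require Import structures.
From mathcomp Require Import all_boot all_order all_algebra.
From mathcomp Require Import finmap zify.
Import Order.TTheory GRing.Theory Num.Theory.
Local Open Scope fset_scope.
Local Open Scope ring_scope.

Lemma ton_spec (z : int) : (0 <= z /\ (ton z)%:Z = z) \/ (z <= 0 /\ ton z = 0%N).
Proof. case: z => m /=; [left|right]; split => //; lia. Qed.

Ltac tspec1 z := let m := fresh "m" in let H := fresh "H" in
  have H := ton_spec z; move: (ton z) H => m H.
Ltac tlia := repeat match goal with
 | H : context [ton _] |- _ => revert H
 end; repeat match goal with |- context [ton ?z] => tspec1 z end; intros; lia.

Lemma mem_irange (lo hi x : int) : (x \in irange lo hi) = (lo <= x <= hi).
Proof.
rewrite /irange; apply/mapP/idP.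
- case=> i; rewrite mem_iota add0n => /andP[_ hi'] ->.
  case: (ton_spec (hi - lo + 1)) => [[h1 h2]|[h1 h2]]; lia.
- move=> h; exists (ton (x - lo)); last by case: (ton_spec (x - lo)); lia.
  rewrite mem_iota add0n /=.
  case: (ton_spec (hi - lo + 1)); case: (ton_spec (x - lo)); lia.
Qed.

Lemma uniq_irange (lo hi : int) : uniq (irange lo hi).
Proof. rewrite map_inj_uniq ?iota_uniq // => i j H; lia. Qed.

Lemma count_le1 (T : eqType) (p : pred T) (s : seq T) : uniq s ->
  (forall x y, x \in s -> y \in s -> p x -> p y -> x = y) -> (count p s <= 1)%N.
Proof.
elim: s => //= a s IH /andP[an us] H.
case pa: (p a) => /=; last first.
  by rewrite add0n; apply: IH => // x y xs ys; apply: H; rewrite inE ?xs ?ys orbT.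
rewrite add1n ltnS leqn0 eqn0Ngt -has_count; apply/hasPn => y ys; apply/negP => py.
have ys' : y \in a :: s by rewrite inE ys orbT.
have e := H a y (mem_head _ _) ys' pa py.
by rewrite e ys in an.
Qed.

Lemma sum_fset2 (a b : int) : a != b -> \sum_(x <- [fset a; b]) x = a + b.
Proof. by move=> ab; rewrite big_fsetU1 ?big_seq_fset1 // inE. Qed.

Lemma sumU (A B : {fset int}) : (forall x, x \in A -> x \notin B) ->
  \sum_(x <- A `|` B) x = \sum_(x <- A) x + \sum_(x <- B) x.
Proof.
move=> H; rewrite (big_fsetID _ (mem A)) /=; congr (_ + _); apply: eq_fbigl => x;
  rewrite !inE /=.
- by case xA: (x \in A); rewrite ?andbT ?andbF ?orbT.
- case xA: (x \in A) => /=; last by rewrite andbT.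
  by have := H x xA; case: (x \in B).
Qed.

Lemma sumD0 (U : {fset int}) : \sum_(x <- U `\ 0) x = \sum_(x <- U) x.
Proof.
case h: (0 \in U); first by rewrite [in RHS](big_fsetD1 _ h) /= add0r.
by rewrite mem_fsetD1 // h.
Qed.

Definition mult (T : seq {fset int}) (x : int) := count (fun U => x \in U) T.

Lemma mult0 (T : seq {fset int}) (x : int) : (forall U, U \in T -> x \notin U) -> mult T x = 0%N.
Proof.
rewrite /mult; elim: T => //= U T IH H; rewrite (negbTE (H U (mem_head _ _))) IH // => V hV.
by apply: H; rewrite inE hV orbT.
Qed.

Definition pairF (c n i : int) : {fset int} := [fset c + (i - 1); n - (i - 1)].

Lemma pairF_in (c n i x : int) : (x \in pairF c n i) = (x == c + (i-1)) || (x == n - (i-1)).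
Proof. by rewrite /pairF !inE. Qed.

Lemma pair_count (c n a x : int) : 2 * a <= n - c + 1 ->
  (count (fun i => x \in pairF c n i) (irange 1 a) <= 1)%N.
Proof.
move=> ha; apply: count_le1; first exact: uniq_irange.
move=> i j; rewrite !mem_irange !pairF_in => /andP[hi1 hi2] /andP[hj1 hj2].
by case/orP => /eqP e1; case/orP => /eqP e2; lia.
Qed.

Lemma pair_has (c n a x : int) : (c <= x /\ x <= c + a - 1) \/ (n - a + 1 <= x /\ x <= n) ->
  has (fun i => x \in pairF c n i) (irange 1 a).
Proof.
case=> [[h1 h2]|[h1 h2]]; apply/hasP; [exists (x - c + 1) | exists (n - x + 1)];
  rewrite ?mem_irange ?pairF_in; try (apply/andP; split; lia).
- by apply/orP; left; apply/eqP; lia.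
- by apply/orP; right; apply/eqP; lia.
Qed.

Lemma pair_mem (c n a i x : int) : i \in irange 1 a -> x \in pairF c n i ->
  (c <= x /\ x <= c + a - 1) \/ (n - a + 1 <= x /\ x <= n).
Proof.
rewrite mem_irange pairF_in => /andP[h1 h2]; case/orP => /eqP e; lia.
Qed.

Lemma pair_sum (c n a i : int) : i \in irange 1 a -> 2 * a <= n - c + 1 ->
  \sum_(x <- pairF c n i) x = c + n.
Proof.
rewrite mem_irange => /andP[h1 h2] ha; rewrite sum_fset2; first lia.
apply/eqP; lia.
Qed.

Fixpoint pairup (R : seq {fset int}) : seq {fset int} :=
  if R is a :: b :: r then (a `|` b) :: pairup r else [::].

Lemma pairup_ind (P : seq {fset int} -> Prop) : P [::] -> (forall a, P [:: a]) ->
  (forall a b r, P r -> P (a :: b :: r)) -> forall R, P R.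
Proof.
move=> H0 H1 H2; fix IH 1; case=> [|a [|b r]];
  [exact H0 | exact (H1 a) | exact (H2 a b r (IH r))].
Qed.

Lemma pairup_size (R : seq {fset int}) : size (pairup R) = (size R)./2.
Proof. by elim/pairup_ind: R => //= a b r ->. Qed.

Lemma pairup_mult (R : seq {fset int}) (x : int) : (mult (pairup R) x <= mult R x)%N.
Proof.
elim/pairup_ind: R => //= a b r IH; rewrite /mult /= in_fsetU -/(mult _ x) -/(mult _ x).
by case: (x \in a); case: (x \in b) => /=; lia.
Qed.

Lemma pairup_has (R : seq {fset int}) (x : int) : ~~ odd (size R) -> has (fun U => x \in U) R ->
  has (fun U => x \in U) (pairup R).
Proof.
elim/pairup_ind: R => //= a b r IH.
rewrite ?negbK => hr; rewrite in_fsetU.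
case/orP => [xa|/orP[xb|h]]; [by rewrite xa | by rewrite xb orbT | by rewrite IH ?orbT].
Qed.

Lemma pairup_elems (R : seq {fset int}) (lo hi : int) :
  (forall U, U \in R -> forall x, x \in U -> lo <= x <= hi) ->
  forall U, U \in pairup R -> forall x, x \in U -> lo <= x <= hi.
Proof.
elim/pairup_ind: R => //= a b r IH H U; rewrite inE; case/orP => [/eqP ->|hU] x.
  by rewrite in_fsetU; case/orP => hx; [apply: (H a) | apply: (H b)];
     rewrite ?inE ?eqxx ?orbT.
apply: (IH _ U hU x) => V hV; apply: H; by rewrite !inE hV !orbT.
Qed.

Lemma pairup_sum (R : seq {fset int}) (h : int) : (forall x, mult R x <= 1)%N ->
  (forall U, U \in R -> \sum_(x <- U) x = h) ->
  forall U, U \in pairup R -> \sum_(x <- U) x = h + h.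
Proof.
elim/pairup_ind: R => //= a b r IH Hm H U; rewrite inE; case/orP => [/eqP ->|hU].
  rewrite sumU ?(H a) ?(H b) ?inE ?eqxx ?orbT // => x xa.
  apply/negP => xb; have := Hm x; rewrite /mult /= xa xb /=; lia.
apply: IH hU => [x|V hV]; last by apply: H; rewrite !inE hV !orbT.
have := Hm x; rewrite /mult /=; case: (x \in a); case: (x \in b) => /=; lia.
Qed.

Definition Inv (n k t : int) :=
  [/\ 1 <= t, n <= t, -1 <= n, 0 <= k & k * t * 2 = n * (n + 1)].

Lemma inv_big (n k t : int) : Inv n k t -> k != 0 -> k != 1 -> 2 * n <= t ->
  Inv (n - 2 * k) k (t - 2 * (n - k) - 1) /\ 3 <= n - 2 * k.
Proof.
case=> h1 h2 h3 h4 he /eqP k0 /eqP k1 hb.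
have hk : 2 <= k by lia.
have hn : 1 <= n by nia.
have h4k : 4 * k <= n + 1 by nia.
have hp : 0 <= (n - 2 * k) * (n - 4 * k + 1) by nia.
have ht : 3 * n - 4 * k + 1 <= t by nia.
split; last lia.
split; nia.
Qed.

Lemma inv_even (n k t : int) : Inv n k t -> k != 0 -> k != 1 -> t <= 2 * n - 1 -> (2 %| t)%Z ->
  Inv (t - n - 1) (2 * (k - n) + t - 1) (t %/ 2)%Z /\ 1 <= 2 * (k - n) + t - 1.
Proof.
case=> h1 h2 h3 h4 he /eqP k0 /eqP k1 hb hd.
set h := (t %/ 2)%Z.
have ht : t = 2 * h by rewrite /h; lia.
have hh : 1 <= h by lia.
have e' : (2 * (k - n) + t - 1) * h * 2 = (t - n - 1) * (t - n - 1 + 1) by rewrite ht; nia.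
have hp : 0 <= (t - n - 1) * (t - n - 1 + 1).
  have [hx|hx] : 0 <= t - n - 1 \/ t - n - 1 = -1 by lia.
    by apply: mulr_ge0; lia.
  by rewrite hx.
have hk' : 0 <= 2 * (k - n) + t - 1 by nia.
split; first by split; lia.
case: (ltrP 0 (2 * (k - n) + t - 1)) => hc; first lia.
have e0 : 2 * (k - n) + t - 1 = 0 by lia.
move: e'; rewrite e0 mul0r mul0r => /esym /eqP; rewrite mulf_eq0 => /orP[] /eqP e1.
- have en : n = 2 * h - 1 by lia.
  move: he; rewrite en ht => he.
  have : 2 * h * (2 * k - 2 * h + 1) = 0 by nia.
  move/eqP; rewrite mulf_eq0 => /orP[] /eqP; lia.
- have en : n = 2 * h by lia.
  move: he; rewrite en ht => he.
  have : 2 * h * (2 * k - 2 * h - 1) = 0 by nia.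
  move/eqP; rewrite mulf_eq0 => /orP[] /eqP; lia.
Qed.

Lemma inv_odd (n k t : int) : Inv n k t -> k != 0 -> k != 1 -> t <= 2 * n - 1 -> ~~ (2 %| t)%Z ->
  Inv (t - n - 1) (k - ((2 * n - t + 1) %/ 2)%Z) t.
Proof.
case=> h1 h2 h3 h4 he /eqP k0 /eqP k1 hb hd.
set h := (t %/ 2)%Z.
have ht : t = 2 * h + 1 by rewrite /h; lia.
have ha : ((2 * n - t + 1) %/ 2)%Z = n - h by rewrite /h; lia.
rewrite ha.
have e' : (k - (n - h)) * t * 2 = (t - n - 1) * (t - n - 1 + 1) by rewrite ht; nia.
have hp : 0 <= (t - n - 1) * (t - n - 1 + 1).
  have [hx|hx] : 0 <= t - n - 1 \/ t - n - 1 = -1 by lia.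
    by apply: mulr_ge0; lia.
  by rewrite hx.
split; try lia; nia.
Qed.

Lemma inv_n1 (n k t : int) : Inv n k t -> k != 0 -> 1 <= n.
Proof.
case=> h1 h2 h3 h4 he /eqP k0.
have hkt : 1 <= k * t by apply: mulr_ege1; lia.
have [hx|hx] : n = -1 \/ n = 0 \/ 1 <= n by lia.
  by move: he; rewrite hx; lia.
case: hx => // hx; by move: he; rewrite hx; lia.
Qed.

Arguments inv_n1 {n k t}. Arguments inv_big {n k t}. Arguments inv_even {n k t}.
Arguments inv_odd {n k t}.

Lemma exists_sol (N : nat) : forall (n k t : int), (ton (n + 1) <= N)%N -> Inv n k t ->
  exists T, PiSolve n k t T.
Proof.
elim: N => [|N IH] n k t hN hI;
  (case: (eqVneq k 0) => [->|k0]; first by exists [::]; constructor);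
  (case: (eqVneq k 1) => [->|k1]; first by eexists; constructor).
- have hn := inv_n1 hI k0.
  by case: (ton_spec (n + 1)); lia.
have hn := inv_n1 hI k0.
have hk : 2 <= k by case: hI => *; move/eqP: k0; move/eqP: k1; lia.
have hNn : n <= N%:Z by case: (ton_spec (n + 1)); lia.
case: (lerP (2 * n) t) => hb.
  have [hI' h3] := inv_big hI k0 k1 hb.
  have [|S HS] := IH _ _ _ _ hI'; first by case: (ton_spec (n - 2 * k + 1)); lia.
  by eexists; apply: (PS_big k0 k1 hb HS).
have hb' : t <= 2 * n - 1 by lia.
have htn : t <= n + n by lia.
case: (boolP (2 %| t)%Z) => hd.
  have [hI' _] := inv_even hI k0 k1 hb' hd.
  have [|S HS] := IH _ _ _ _ hI'; first by case: hI => *; case: (ton_spec (t - n - 1 + 1)); lia.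
  by eexists; apply: (PS_even k0 k1 hb' hd HS).
have hI' := inv_odd hI k0 k1 hb' hd.
have [|S HS] := IH _ _ _ _ hI'; first by case: hI => *; case: (ton_spec (t - n - 1 + 1)); lia.
by eexists; apply: (PS_odd k0 k1 hb' hd HS).
Qed.

Lemma tonP (z : int) (m : nat) : z = m%:Z -> ton z = m.
Proof. by move->. Qed.

Lemma size_irange (lo hi : int) : size (irange lo hi) = ton (hi - lo + 1).
Proof. by rewrite size_map size_iota. Qed.

Lemma sum_irange1 (m : nat) : (\sum_(x <- irange 1 m%:Z) x) * 2 = m%:Z * (m%:Z + 1).
Proof.
rewrite /irange subrK /= big_map.
elim: m => [|m IH]; first by rewrite big_nil.
rewrite -addn1 iotaD big_cat big_seq1 /= mulrDl IH; lia.
Qed.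

Lemma sum_upto (n : int) : 0 <= n -> (\sum_(x <- upto n) x) * 2 = n * (n + 1).
Proof.
move=> hn; rewrite (perm_big (irange 1 n)).
  have -> : n = (ton n)%:Z by case: (ton_spec n); lia.
  exact: sum_irange1.
apply: uniq_perm; [exact: fset_uniq | exact: uniq_irange | move=> x].
by rewrite /upto !inE.
Qed.

Lemma snth_irange1 (S : seq {fset int}) (K : int) : (size S)%:Z = K ->
  [seq snth S m | m <- irange 1 K] = S.
Proof.
move=> hK; rewrite /irange -map_comp (_ : ton (K - 1 + 1) = size S); last by rewrite subrK -hK.
rewrite -[RHS](mkseq_nth fset0) /mkseq; apply: eq_map => i /=; rewrite /snth.
by have -> : ton (1 + i%:Z - 1) = i by apply: tonP; lia.
Qed.

Lemma pairupE M (R : seq {fset int}) : size R = (2 * M)%N ->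
  [seq nth fset0 R (2 * j) `|` nth fset0 R (2 * j).+1 | j <- iota 0 M] = pairup R.
Proof.
elim: M R => [|M IH] [|a [|b r]] //= h; try lia.
congr (_ :: _).
rewrite -(IH r); last lia.
have := iotaDl 1 0 M; rewrite addn0 => ->; rewrite -map_comp; apply: eq_map => j; rewrite /comp.
by rewrite (_ : (2 * (1 + j) = (2 * j).+2)%N); last lia.
Qed.

Lemma snth_pairs (s1 : {fset int}) (R : seq {fset int}) (K : int) : (size R)%:Z = 2 * (K - 1) ->
  [seq snth (s1 :: R) (2 * m - 2) `|` snth (s1 :: R) (2 * m - 1) | m <- irange 2 K]
  = pairup R.
Proof.
move=> hK; have hR : size R = (2 * ton (K - 1))%N by case: (ton_spec (K - 1)); lia.
rewrite -(pairupE _ _ hR) /irange -map_comp (_ : K - 2 + 1 = K - 1); last lia.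
apply: eq_map => j /=; rewrite /snth.
have -> : ton (2 * (2 + j%:Z) - 2 - 1) = (2 * j).+1 by apply: tonP; lia.
by have -> : ton (2 * (2 + j%:Z) - 1 - 1) = (2 * j).+2 by apply: tonP; lia.
Qed.

Lemma big_list (n k : int) (S : seq {fset int}) : (size S)%:Z = k ->
  [seq [fset n - 2 * k + i; n - (i - 1)] `|` snth S i | i <- irange 1 k] =
  [seq pairF (n - 2 * k + 1) n (1 + j%:Z) `|` nth fset0 S j | j <- iota 0 (size S)].
Proof.
move=> hk; rewrite /irange -map_comp (_ : ton (k - 1 + 1) = size S); last by rewrite subrK -hk.
apply: eq_map => j /=; rewrite /snth /pairF.
have -> : ton (1 + j%:Z - 1) = j by apply: tonP; lia.
by have -> : n - 2 * k + 1 + (1 + j%:Z - 1) = n - 2 * k + (1 + j%:Z) by lia.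
Qed.

Definition Good (n k t : int) (T : seq {fset int}) :=
  [/\ (size T)%:Z = k,
      forall x : int, (mult T x <= 1)%N,
      forall x : int, 1 <= x <= n -> has (fun U : {fset int} => x \in U) T,
      forall U : {fset int}, U \in T -> forall x : int, x \in U -> 0 <= x <= n &
      forall U : {fset int}, U \in T -> \sum_(x <- U) x = t].

Lemma mult_cat (A B : seq {fset int}) (x : int) : mult (A ++ B) x = (mult A x + mult B x)%N.
Proof. by rewrite /mult count_cat. Qed.

Lemma mult_cons (U : {fset int}) (T : seq {fset int}) (x : int) : mult (U :: T) x = ((x \in U) + mult T x)%N.
Proof. by []. Qed.

Section PL.
Variables (c n a : int).
Hypothesis hc : 0 <= c.
Hypothesis ha : 2 * a <= n - c + 1.
Let PL := map (pairF c n) (irange 1 a).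

Lemma PL_mult (x : int) : (mult PL x <= 1)%N.
Proof. by rewrite /mult count_map; apply: pair_count. Qed.

Lemma PL_elems (U : {fset int}) (x : int) : U \in PL -> x \in U ->
  (c <= x /\ x <= c + a - 1) \/ (n - a + 1 <= x /\ x <= n).
Proof. by case/mapP => i hi ->; apply: pair_mem. Qed.

Lemma PL_out (x : int) : x < c \/ (c + a - 1 < x /\ x < n - a + 1) \/ n < x -> mult PL x = 0%N.
Proof.
move=> hx; apply: mult0 => U hU; apply/negP => xU.
have := PL_elems _ _ hU xU; lia.
Qed.

Lemma PL_has (x : int) : (c <= x /\ x <= c + a - 1) \/ (n - a + 1 <= x /\ x <= n) ->
  has (fun U => x \in U) PL.
Proof. by move=> hx; rewrite has_map; apply: pair_has. Qed.

Lemma PL_sum (U : {fset int}) : U \in PL -> \sum_(x <- U) x = c + n.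
Proof. by case/mapP => i hi ->; apply: (pair_sum _ _ _ _ hi ha). Qed.

End PL.
Arguments PL_mult {c n a} ha x.
Arguments PL_elems {c n a U x} _ _.
Arguments PL_out {c n a} hc ha x _.
Arguments PL_has {c n a x} _.
Arguments PL_sum {c n a} ha {U} _.

Ltac andlia := apply/andP; split; lia.

Lemma correct (n k t : int) (T : seq {fset int}) : PiSolve n k t T -> Inv n k t -> Good n k t T.
Proof.
elim => {n k t T}.
- move=> n t [h1 h2 h3 h4 he].
  have hn : n <= 0.
    have : n * (n + 1) == 0 by rewrite -he mul0r mul0r.
    by rewrite mulf_eq0 => /orP[] /eqP; lia.
  split => //= x; lia.
- move=> n t hI.
  have hn := inv_n1 hI (oner_neq0 _).
  case: hI => h1 h2 h3 h4 he.
  split => //=.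
  + by move=> x; rewrite /mult /=; case: (_ \in _).
  + by move=> x hx; rewrite /upto !inE mem_irange hx.
  + move=> U; rewrite inE => /eqP -> x; rewrite /upto !inE mem_irange => /andP[? ?].
    andlia.
  + move=> U; rewrite inE => /eqP ->; have h0 : 0 <= n by lia.
    have := sum_upto n h0; move: (\sum_(x <- _) _) => s; lia.
- move=> n k t S k0 k1 hb hd a HS IH hI.
  have [hI' hk'] := inv_even hI k0 k1 hb hd.
  have {hb}hb : t <= 2 * n - 1 := hb.
  have G : Good (t - n - 1) (2 * (k - n) + t - 1) (t %/ 2)%Z S := IH hI'.
  case: hI => h1 h2 h3 h4 he.
  have hn := inv_n1 (And5 h1 h2 h3 h4 he) k0.
  have ha : a = n - (t %/ 2)%Z by rewrite /a; lia.
  clearbody a.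
  have [h eh] : exists h, (t %/ 2)%Z = h by eexists.
  have ht : t = 2 * h by rewrite -eh; lia.
  rewrite eh in G ha *.
  case: S HS IH G => [|s1 R] HS IH [hsz hm hcov hel hsum].
    by rewrite /= in hsz; lia.
  rewrite snth_pairs; last by rewrite /= in hsz; lia.
  rewrite (_ : snth (s1 :: R) 1 = s1) //.
  change [seq [fset t - n + (i - 1); n - (i - 1)] | i <- irange 1 a] with
    (map (pairF (t - n) n) (irange 1 a)).
  have hc : 0 <= t - n by lia.
  have hpa : 2 * a <= n - (t - n) + 1 by lia.
  have [M hM] : exists M, size R = (2 * M)%N.
    by exists (ton (k - a - 1)); rewrite /= in hsz; tlia.
  have hev : ~~ odd (size R) by rewrite hM oddM.
  have hR1 : forall x : int, (mult R x <= 1)%N.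
    by move=> x; have := hm x; rewrite mult_cons; lia.
  have hsR : forall U : {fset int}, U \in R -> \sum_(x <- U) x = h.
    by move=> U hU; apply: hsum; rewrite inE hU orbT.
  have helR : forall U : {fset int}, U \in R -> forall x : int, x \in U -> 0 <= x <= t - n - 1.
    by move=> U hU; apply: hel; rewrite inE hU orbT.
  have hel1 : forall x : int, x \in s1 -> 0 <= x <= t - n - 1 := hel s1 (mem_head _ _).
  have hs1 : \sum_(x <- s1) x = h := hsum s1 (mem_head _ _).
  have hRx : forall x : int, t - n - 1 < x -> mult R x = 0%N.
    move=> x hx; apply: mult0 => U hU; apply/negP => /(helR U hU) /andP[? ?]; lia.
  split.
  + rewrite !size_cat size_map size_irange /= pairup_size hM mul2n doubleK.
    rewrite /= in hsz; tlia.
  + move=> x; rewrite !mult_cat mult_cons in_fsetU in_fset1 /=.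
    have hp := pairup_mult R x.
    case: (lerP x (t - n - 1)) => hx.
      rewrite (PL_out hc hpa x); last lia.
      have xh : (x == h) = false by apply/eqP; lia.
      rewrite xh /=; have := hm x; rewrite mult_cons.
      by case: (x \in s1) => /=; lia.
    have xs1 : (x \in s1) = false by apply/negP => /hel1 /andP[? ?]; lia.
    have := hRx x hx; rewrite xs1 orbF => hR0.
    case: (eqVneq x h) => [exh|xh].
      subst x; rewrite (PL_out hc hpa h) /=; lia.
    have := PL_mult hpa x; rewrite /=; lia.
  + move=> x /andP[hx1 hx2]; rewrite !has_cat /= in_fsetU in_fset1.
    case: (lerP x (t - n - 1)) => hx.
      have : has (fun U : {fset int} => x \in U) (s1 :: R) by apply: hcov; rewrite hx1 hx.
      rewrite /=; case/orP => [->|hR]; first by rewrite !orbT.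
      by rewrite pairup_has ?orbT.
    case: (eqVneq x h) => [->|xh]; first by rewrite !orbT.
    by rewrite PL_has //; lia.
  + move=> U; rewrite !mem_cat inE => /orP[hU|/orP[/eqP->|hU]] x.
    * by move=> xU; have hh := PL_elems hU xU; andlia.
    * rewrite in_fsetU in_fset1 => /orP[/eqP->|/hel1/andP[? ?]]; andlia.
    * by move=> xU; have /andP[? ?] := pairup_elems _ _ _ helR _ hU _ xU; andlia.
  + move=> U; rewrite !mem_cat inE => /orP[hU|/orP[/eqP->|hU]].
    * by rewrite (PL_sum hpa hU); lia.
    * rewrite sumU ?big_seq_fset1 ?hs1; first lia.
      by move=> y; rewrite in_fset1 => /eqP ->; apply/negP => /hel1 /andP[? ?]; lia.
    * by rewrite (pairup_sum _ _ hR1 hsR _ hU); lia.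
- move=> n k t S k0 k1 hb hd a HS IH hI.
  have hI' := inv_odd hI k0 k1 hb hd.
  have {hb}hb : t <= 2 * n - 1 := hb.
  have [hsz hm hcov hel hsum] : Good (t - n - 1) (k - a) t S := IH hI'.
  case: hI => h1 h2 h3 h4 he.
  have hn := inv_n1 (And5 h1 h2 h3 h4 he) k0.
  have ha : a = n - (t %/ 2)%Z by rewrite /a; lia.
  clearbody a.
  have ht : t = 2 * (t %/ 2)%Z + 1 by lia.
  rewrite (snth_irange1 _ _ hsz).
  change [seq [fset t - n + (i - 1); n - (i - 1)] | i <- irange 1 a] with
    (map (pairF (t - n) n) (irange 1 a)).
  have hc : 0 <= t - n by lia.
  have hpa : 2 * a <= n - (t - n) + 1 by lia.
  split.
  + rewrite size_cat size_map size_irange.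
    by tlia.
  + move=> x; rewrite mult_cat.
    case: (lerP x (t - n - 1)) => hx.
      by rewrite (PL_out hc hpa) ?add0n ?hm //; lia.
    rewrite (@mult0 S) ?addn0; first exact: (PL_mult hpa).
    by move=> U hU; apply/negP => xU; have := hel U hU x xU; lia.
  + move=> x /andP[hx1 hx2]; rewrite has_cat.
    case: (lerP x (t - n - 1)) => hx.
      by rewrite hcov ?orbT // hx1 hx.
    by rewrite PL_has //; lia.
  + move=> U; rewrite mem_cat => /orP[hU|hU] x xU.
      by have := PL_elems hU xU; lia.
    by have := hel U hU x xU => /andP[? ?]; andlia.
  + move=> U; rewrite mem_cat => /orP[hU|hU]; last exact: hsum.
    by rewrite (PL_sum hpa hU); lia.
- move=> n k t S k0 k1 hb HS IH hI.
  have [hI' h3k] := inv_big hI k0 k1 hb.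
  have {hb}hb : 2 * n <= t := hb.
  have G : Good (n - 2 * k) k (t - 2 * (n - k) - 1) S := IH hI'.
  case: G => hsz hm hcov hel hsum.
  case: hI => h1 h2 h3 h4 he.
  rewrite (big_list n k S hsz).
  have [c ec] : exists c, c = n - 2 * k + 1 by eexists.
  rewrite -ec.
  have hpa : 2 * k <= n - c + 1 by lia.
  have hK : ton (k - 1 + 1) = size S by apply: tonP; lia.
  have hirr : irange 1 k = [seq 1 + j%:Z | j <- iota 0 (size S)] by rewrite /irange hK.
  have hj : forall j, j \in iota 0 (size S) -> 1 + j%:Z \in irange 1 k.
    by move=> j; rewrite mem_iota mem_irange => /andP[_ hjj]; apply/andP; split; lia.
  have hSj : forall j, j \in iota 0 (size S) -> nth fset0 S j \in S.
    by move=> j; rewrite mem_iota add0n => /andP[_ hjj]; apply: mem_nth.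
  split.
  + by rewrite size_map size_iota.
  + move=> x; rewrite /mult count_map.
    case: (lerP x (n - 2 * k)) => hx.
    * rewrite (@eq_in_count _ _ (fun j => x \in nth fset0 S j)); last first.
        move=> j hjin /=; rewrite in_fsetU.
        case e: (x \in pairF c n (1 + j%:Z)) => //=.
        by exfalso; have := pair_mem _ _ _ _ _ (hj j hjin) e; lia.
      by have := hm x; rewrite /mult -{1}(mkseq_nth fset0 S) /mkseq count_map.
    * rewrite (@eq_in_count _ _ (fun j => x \in pairF c n (1 + j%:Z))); last first.
        move=> j hjin /=; rewrite in_fsetU.
        case e: (x \in nth fset0 S j); last by rewrite orbF.
        by exfalso; have /andP[? ?] := hel _ (hSj j hjin) x e; lia.
      by have := pair_count c n k x hpa; rewrite hirr count_map.
  + move=> x /andP[hx1 hx2]; rewrite has_map.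
    case: (lerP x (n - 2 * k)) => hx.
    * have hh : has (fun U : {fset int} => x \in U) S by apply: hcov; rewrite hx1 hx.
      move: hh; rewrite -{1}(mkseq_nth fset0 S) /mkseq has_map => hh.
      by apply: sub_has hh => j /=; rewrite in_fsetU => ->; rewrite orbT.
    * have hh := @pair_has c n k x ltac:(lia).
      move: hh; rewrite hirr has_map => hh.
      by apply: sub_has hh => j hjx; rewrite /= in_fsetU; apply/orP; left.
  + move=> U /mapP[j hjin ->] x; rewrite in_fsetU => /orP[e|e].
      by have hh := pair_mem _ _ _ _ _ (hj j hjin) e; andlia.
    by have /andP[? ?] := hel _ (hSj j hjin) x e; andlia.
  + move=> U /mapP[j hjin ->].
    rewrite sumU.
      rewrite (pair_sum _ _ _ _ (hj j hjin) hpa) (hsum _ (hSj j hjin)); lia.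
    move=> y e; apply/negP => e'.
    have := pair_mem _ _ _ _ _ (hj j hjin) e; have /andP[? ?] := hel _ (hSj j hjin) y e'; lia.
Qed.

Lemma mult_two (T : seq {fset int}) (i j : nat) (x : int) : (i < j)%N -> (j < size T)%N ->
  x \in nth fset0 T i -> x \in nth fset0 T j -> (2 <= mult T x)%N.
Proof.
move=> hij hj xi xj.
rewrite /mult -(cat_take_drop j T) count_cat.
have h1 : (0 < count (fun U => x \in U) (take j T))%N.
  rewrite -has_count; apply/(has_nthP fset0); exists i.
    by rewrite size_take hj.
  by rewrite nth_take.
have h2 : (0 < count (fun U => x \in U) (drop j T))%N.
  by rewrite (drop_nth fset0 hj) /= xj.
lia.
Qed.

Lemma has_nth (T : seq {fset int}) (x : int) : has (fun U : {fset int} => x \in U) T ->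
  exists2 j, (j < size T)%N & x \in nth fset0 T j.
Proof.
case/seq.hasP => U hU xU; exists (index U T); first by rewrite index_mem.
by rewrite nth_index.
Qed.

Theorem mainTheorem1 (n k t : nat) :
  (0 < n)%N -> (0 < k)%N -> (0 < t)%N ->
  (k * t = n * (n + 1) %/ 2)%N -> (n <= t)%N ->
  (exists T : seq {fset int}, PiSolve n%:Z k%:Z t%:Z T) /\
  (forall T : seq {fset int}, PiSolve n%:Z k%:Z t%:Z T ->
     size T = k /\
         (forall i j : nat, (i < j < k)%N ->
            nth fset0 T i `&` nth fset0 T j = fset0) /\
         (forall x : int, 1 <= x <= n%:Z ->
            exists2 j : nat, (j < k)%N & x \in nth fset0 T j) /\
         (forall (j : nat) (x : int), (j < k)%N -> x \in nth fset0 T j ->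
            0 <= x <= n%:Z) /\
         (forall j : nat, (j < k)%N -> \sum_(x <- nth fset0 T j) x = t%:Z) /\
         partitioning n%:Z k%:Z t%:Z [seq U `\ 0 | U <- T]).
Proof.
move=> hn hk ht he hnt.
have e2 : (n * (n + 1) %/ 2 * 2 = n * (n + 1))%N.
  by rewrite divnK // dvdn2 oddM oddD /=; case: (odd n).
have hI : Inv n%:Z k%:Z t%:Z.
  by split; lia.
split; first exact: (exists_sol (ton (n%:Z + 1)) _ _ _ (leqnn _) hI).
move=> T HT; have [hsz hm hcov hel hsum] := correct _ _ _ _ HT hI.
have {}hsz : size T = k by lia.
have hdis : forall i j : nat, (i < j < size T)%N ->
    nth fset0 T i `&` nth fset0 T j = fset0.
  move=> i j /andP[hij hj]; apply/fsetP => x; rewrite !inE.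
  apply/negP => /andP[xi xj]; have := mult_two _ _ _ _ hij hj xi xj; have := hm x; lia.
split; first done.
split; first by rewrite -hsz.
split.
  by move=> x hx; rewrite -hsz; apply: has_nth; apply: hcov.
split.
  by move=> j x hj; apply: hel; apply: mem_nth; rewrite hsz.
split.
  by move=> j hj; apply: hsum; apply: mem_nth; rewrite hsz.
split.
- by rewrite size_map hsz.
- move=> i j; rewrite size_map => /andP[hij hj].
  rewrite !(nth_map fset0) //; last exact: ltn_trans hij hj.
  apply/fsetP => x; rewrite !inE.
  apply/negP => /andP[/andP[_ xi] /andP[_ xj]].
  have := mult_two _ _ _ _ hij hj xi xj; have := hm x; lia.
- move=> x; rewrite size_map; split.
    case=> j hj; rewrite (nth_map fset0) // in_fsetD1 => /andP[x0 xj].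
    have /andP[? ?] := hel _ (mem_nth fset0 hj) x xj.
    move/eqP: x0 => x0; apply/andP; split; lia.
  move=> hx; have [j hj xj] := has_nth _ _ (hcov x hx).
  by exists j; rewrite // (nth_map fset0) // in_fsetD1 xj andbT; apply/eqP; case/andP: hx => ? ?; lia.
- move=> j; rewrite size_map => hj; rewrite (nth_map fset0) // sumD0.
  by apply: hsum; apply: mem_nth.
Qed.
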